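(* Let $A=(a_1\ a_2\ a_3)$ be a $1\times3$ matrix of pairwise distinct positive integers whose toric ideal $I_A$ is a complete intersection. Let $M=\{b,c\}$ be a minimal Markov basis for $A$ with $b=(b_1,-b_2,0)$ and $c=(c_1,c_2,-c_3)$, where $b_1,b_2,c_3>0$, $c_1,c_2\ge 0$ are integers and $b_1>b_2$. Then the following are equivalent: (1) $M$ is distance reducing; (2) $M$ reduces the distance of the circuit $z=\gamma(0,a_3,-a_2)$, where $\gamma=1/\gcd(a_2,a_3)$; (3) $c_1<c_2+c_3$.
   Context: For $z\in\mathbb Z^n$, $z^+,z^-\in\mathbb N^n$ denote the unique vectors with disjoint supports and $z=z^+-z^-$; $\|\cdot\|$ is the $1$-norm. The toric ideal is $I_A=\langle x^{u^+}-x^{u^-}:u\in\ker(A)\rangle$; it is a complete intersection if it is generated by $\dim\ker(A)$ elements. A Markov basis is a set $B\subseteq\ker(A)$ whose binomials $x^{u^+}-x^{u^-}$ generate $I_A$; minimal means no proper subset is a Markov basis. For nonzero $z\in\ker(A)$, $u\in\ker(A)$ reduces the distance of $z$ if there exist $(p,q)\in\{(z^+,z^-),(z^-,z^+)\}$ and $\varepsilon\in\{\pm1\}$ with $p+\varepsilon u\in\mathbb N^n$ and $\|p+\varepsilon u-q\|<\|z\|$. $B$ reduces the distance of $Z$ if each nonzero $z\in Z$ has its distance reduced by some element of $B$; $B$ is distance reducing if it reduces the distance of $\ker(A)$. *)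

(* Defs.v *)
From HB Require Import structures.
From mathcomp Require Import all_boot all_order all_algebra.
From mathcomp Require Import mpoly.
Set Implicit Arguments. Unset Strict Implicit. Unset Printing Implicit Defensive.
Import Order.TTheory GRing.Theory Num.Theory.
Local Open Scope ring_scope.

Definition zpos n (z : 'cV[int]_n) : 'cV[int]_n := \col_i Num.max (z i 0) 0.
Definition zneg n (z : 'cV[int]_n) : 'cV[int]_n := \col_i Num.max (- z i 0) 0.

Definition norm1 n (z : 'cV[int]_n) : int := \sum_i `|z i 0|.

Definition nonneg n (p : 'cV[int]_n) : Prop := forall i, 0 <= p i 0.

Definition in_ker m n (A : 'M[int]_(m, n)) (u : 'cV[int]_n) : Prop := A *m u = 0.

Definition dimker m n (A : 'M[int]_(m, n)) : nat :=
  (n - \rank (map_mx (fun x : int => x%:~R : rat) A))%N.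

Definition mono n (p : 'cV[int]_n) : 'X_{1..n} := [multinom absz (p i ord0) | i < n].

Definition binom (F : fieldType) n (u : 'cV[int]_n) : {mpoly F[n]} :=
  'X_[mono (zpos u)] - 'X_[mono (zneg u)].
Arguments binom F {n} u.

Definition ideal_gen (F : fieldType) n (S : {mpoly F[n]} -> Prop) :
  {mpoly F[n]} -> Prop :=
  fun p => exists l : seq ({mpoly F[n]} * {mpoly F[n]}),
    (forall x, x \in l -> S x.2) /\ p = \sum_(x <- l) x.1 * x.2.

Definition toric_ideal (F : fieldType) m n (A : 'M[int]_(m, n)) : {mpoly F[n]} -> Prop :=
  ideal_gen (fun f => exists u, in_ker A u /\ f = binom F u).
Arguments toric_ideal F {m n} A _.

Definition complete_intersection (F : fieldType) m n (A : 'M[int]_(m, n)) : Prop :=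
  exists s : seq {mpoly F[n]}, size s = dimker A /\
    (forall p, ideal_gen (fun f => f \in s) p <-> toric_ideal F A p).
Arguments complete_intersection F {m n} A.

Definition markov_basis (F : fieldType) m n (A : 'M[int]_(m, n))
  (B : 'cV[int]_n -> Prop) : Prop :=
  (forall u, B u -> in_ker A u) /\
  (forall p, ideal_gen (fun f => exists u, B u /\ f = binom F u) p <-> toric_ideal F A p).
Arguments markov_basis F {m n} A B.

Definition minimal_markov_basis (F : fieldType) m n (A : 'M[int]_(m, n))
  (B : 'cV[int]_n -> Prop) : Prop :=
  markov_basis F A B /\
  forall B' : 'cV[int]_n -> Prop,
    (forall u, B' u -> B u) -> (exists u, B u /\ ~ B' u) -> ~ markov_basis F A B'.
Arguments minimal_markov_basis F {m n} A B.

Definition reduces_distance m n (A : 'M[int]_(m, n)) (u z : 'cV[int]_n) : Prop :=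
  in_ker A u /\
  exists p q, ((p = zpos z /\ q = zneg z) \/ (p = zneg z /\ q = zpos z)) /\
  exists eps : int, (eps = 1 \/ eps = -1) /\
    nonneg (p + eps *: u) /\ norm1 (p + eps *: u - q) < norm1 z.

Definition reduces_distance_of m n (A : 'M[int]_(m, n))
  (B Z : 'cV[int]_n -> Prop) : Prop :=
  forall z, Z z -> z != 0 -> exists u, B u /\ reduces_distance A u z.

Definition distance_reducing m n (A : 'M[int]_(m, n)) (B : 'cV[int]_n -> Prop) : Prop :=
  reduces_distance_of A B (in_ker A).

Definition row3 (x y z : int) : 'M[int]_(1, 3) := \row_(i < 3) [:: x; y; z]`_i.
Definition vec3 (x y z : int) : 'cV[int]_3 := \col_(i < 3) [:: x; y; z]`_i.

(* Main.v *)
Require Import Defs.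
From HB Require Import structures.
From mathcomp Require Import all_boot all_order all_algebra.
From mathcomp Require Import mpoly.
From mathcomp Require Import ring lra zify.
From Stdlib Require Classical ClassicalEpsilon.
Set Implicit Arguments. Unset Strict Implicit. Unset Printing Implicit Defensive.
Import Order.TTheory GRing.Theory Num.Theory.
Local Open Scope ring_scope.

Section Psi.
Variables (F : fieldType) (n : nat) (w : 'X_{1..n} -> F).

Definition psi (p : {mpoly F[n]}) : F := \sum_(m <- msupp p) p@_m * w m.

Lemma psiE p s : uniq s -> {subset msupp p <= s} ->
  psi p = \sum_(m <- s) p@_m * w m.
Proof.
move=> us sub; rewrite (bigID (mem (msupp p))) /= [X in _ + X]big1 ?addr0; last first.
  by move=> m /memN_msupp_eq0 ->; rewrite mul0r.
rewrite -big_filter /psi; apply: perm_big; apply: uniq_perm.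
- exact: msupp_uniq.
- exact: filter_uniq.
by move=> m; rewrite mem_filter; apply/idP/andP => [h|[]//]; split => //; apply: sub.
Qed.

Lemma psiB : zmod_morphism psi.
Proof.
move=> p q; set s := undup (msupp p ++ msupp q).
have us : uniq s by apply: undup_uniq.
have sp : {subset msupp p <= s} by move=> m h; rewrite mem_undup mem_cat h.
have sq : {subset msupp q <= s} by move=> m h; rewrite mem_undup mem_cat h orbT.
have spq : {subset msupp (p - q) <= s}.
  move=> m /msuppD_le; rewrite mem_cat mem_undup mem_cat => /orP[->//|].
  by rewrite (perm_mem (msuppN _)) => ->; rewrite orbT.
rewrite (psiE us spq) (psiE us sp) (psiE us sq) -sumrB; apply: eq_bigr => m _.
by rewrite mcoeffB mulrBl.
Qed.

HB.instance Definition _ := GRing.isAdditive.Build {mpoly F[n]} F psi psiB.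

Lemma psiX m : psi 'X_[m] = w m.
Proof. by rewrite /psi msuppX big_seq1 mcoeffX eqxx mul1r. Qed.

Lemma psiMX f m : psi (f * 'X_[m]) = \sum_(k <- msupp f) f@_k * w (m + k)%MM.
Proof.
rewrite /psi (perm_big _ (msuppMX f m)) big_map; apply: eq_bigr => k _.
by rewrite mcoeffMX.
Qed.
End Psi.

Definition mvec n (m : 'X_{1..n}) : 'cV[int]_n := \col_i ((m i)%:Z).

Lemma mvecD n (m1 m2 : 'X_{1..n}) : mvec (m1 + m2)%MM = mvec m1 + mvec m2.
Proof. by apply/matrixP => i j; rewrite !mxE mnmDE PoszD. Qed.

Lemma mvec_pos n (u : 'cV[int]_n) : mvec (mono (zpos u)) = zpos u.
Proof.
apply/matrixP => i j; rewrite /mvec /zpos /zneg !mxE mnmE ord1 !mxE abszE ger0_norm //.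
by rewrite le_max lexx orbT.
Qed.

Lemma mvec_neg n (u : 'cV[int]_n) : mvec (mono (zneg u)) = zneg u.
Proof.
apply/matrixP => i j; rewrite /mvec /zpos /zneg !mxE mnmE ord1 !mxE abszE ger0_norm //.
by rewrite le_max lexx orbT.
Qed.

Lemma zpos_neg n (u : 'cV[int]_n) : zpos u - zneg u = u.
Proof.
apply/matrixP => i j; rewrite /zpos /zneg !mxE ord1.
case: (lerP 0 (u i 0)) => h.
- by rewrite max_r ?subr0 // oppr_le0.
- by rewrite max_l ?sub0r ?opprK // oppr_ge0 ltW.
Qed.

Definition Lp n (b c x : 'cV[int]_n) := exists al be : int, x = al *: b + be *: c.

Lemma markov_lattice (F : fieldType) k n (A : 'M[int]_(k, n)) (b c u : 'cV[int]_n) :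
  markov_basis F A (fun v => v = b \/ v = c) -> in_ker A u -> Lp b c u.
Proof.
move=> [_ HM] Hu; apply: Classical_Prop.NNPP => Hn.
pose w (m : 'X_{1..n}) : F :=
  if ClassicalEpsilon.excluded_middle_informative (Lp b c (mvec m - zpos u)) then 1 else 0.
have Lclos : forall x v, (v = b \/ v = c) -> Lp b c (x + v) <-> Lp b c x.
  move=> x v [->|->]; split=> [[al [be h]]|[al [be h]]].
  - exists (al - 1), be; rewrite scalerBl scale1r addrAC -h; by rewrite addrK.
  - by exists (al + 1), be; rewrite h scalerDl scale1r addrAC.
  - exists al, (be - 1); rewrite scalerBl scale1r addrA -h; by rewrite addrK.
  - by exists al, (be + 1); rewrite h scalerDl scale1r addrA.
have key : forall v f, (v = b \/ v = c) -> psi w (f * binom F v) = 0.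
  move=> v f hv; rewrite /binom mulrBr raddfB /= !psiMX -sumrB big1 // => m _.
  suff -> : w (mono (zpos v) + m)%MM = w (mono (zneg v) + m)%MM by rewrite subrr.
  rewrite /w !mvecD mvec_pos mvec_neg.
  have E : zpos v + mvec m - zpos u = (zneg v + mvec m - zpos u) + v.
    have := zpos_neg v => /matrixP Ev; apply/matrixP => i j.
    move: (Ev i j); rewrite !mxE => <-; ring.
  case: ClassicalEpsilon.excluded_middle_informative => h1;
  case: ClassicalEpsilon.excluded_middle_informative => h2 //; exfalso.
  - by apply: h2; apply/(Lclos _ _ hv); rewrite -E.
  - by apply: h1; rewrite E; apply/(Lclos _ _ hv).
have : toric_ideal F A (binom F u).
  exists [:: (1, binom F u)]; split; last by rewrite big_seq1 mul1r.
  by move=> x; rewrite inE => /eqP -> /=; exists u.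
move/HM => [l [Hl E]].
have : psi w (binom F u) = 0.
  rewrite E raddf_sum /=; apply: big1_seq => x /andP[_ /Hl [v [hv ->]]].
  exact: key.
rewrite /binom raddfB /= !psiX /w mvec_pos mvec_neg subrr.
case: ClassicalEpsilon.excluded_middle_informative => h1; last first.
  by exfalso; apply: h1; exists 0, 0; rewrite !scale0r addr0.
case: ClassicalEpsilon.excluded_middle_informative => h2; last first.
  by rewrite subr0 => /eqP; rewrite oner_eq0.
exfalso; apply: Hn; case: h2 => al [be h]; exists (- al), (- be).
by rewrite -(zpos_neg u) -opprB h opprD !scaleNr.
Qed.

Ltac vec3_tac := apply/matrixP; case; do 3?[case]; move=> * /=; rewrite ?mxE /=; rewrite ?mxE /=.

Lemma vec3_add x y z x' y' z' : vec3 x y z + vec3 x' y' z' = vec3 (x + x') (y + y') (z + z').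
Proof. by vec3_tac. Qed.
Lemma vec3_sub x y z x' y' z' : vec3 x y z - vec3 x' y' z' = vec3 (x - x') (y - y') (z - z').
Proof. by vec3_tac. Qed.
Lemma vec3_scale a x y z : a *: vec3 x y z = vec3 (a * x) (a * y) (a * z).
Proof. by vec3_tac. Qed.
Lemma vec3_zpos x y z : zpos (vec3 x y z) = vec3 (Num.max x 0) (Num.max y 0) (Num.max z 0).
Proof. by rewrite /zpos; vec3_tac. Qed.
Lemma vec3_zneg x y z : zneg (vec3 x y z) = vec3 (Num.max (- x) 0) (Num.max (- y) 0) (Num.max (- z) 0).
Proof. by rewrite /zneg; vec3_tac. Qed.
Lemma vec3_norm1 x y z : norm1 (vec3 x y z) = `|x| + `|y| + `|z|.
Proof. by rewrite /norm1 !big_ord_recr big_ord0 /= !mxE /= add0r. Qed.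
Lemma vec3_nonneg x y z : nonneg (vec3 x y z) <-> [/\ 0 <= x, 0 <= y & 0 <= z].
Proof.
split.
- by move=> h; move: (h 0) (h 1) (h 2); rewrite !mxE /=.
- by case=> hx hy hz i; rewrite mxE; case: i => [[|[|[|i]]] Hi].
Qed.
Lemma vec3_ker a1 a2 a3 x y z :
  in_ker (row3 a1 a2 a3) (vec3 x y z) <-> a1 * x + a2 * y + a3 * z = 0.
Proof.
rewrite /in_ker; split.
- move/matrixP => /(_ 0 0); rewrite !mxE !big_ord_recr big_ord0 /= !mxE /= add0r.
  by [].
- move=> h; apply/matrixP => i j; rewrite !ord1 !mxE !big_ord_recr big_ord0 /= !mxE /= add0r.
  by [].
Qed.
Lemma vec3_eq0 x y z : (vec3 x y z == 0) = [&& x == 0, y == 0 & z == 0].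
Proof.
apply/eqP/and3P.
- by move/matrixP => h; move: (h 0 0) (h 1 0) (h 2 0); rewrite !mxE /= => -> -> ->.
- by case=> /eqP -> /eqP -> /eqP ->; vec3_tac.
Qed.

Ltac finish_red := rewrite ?vec3_zpos ?vec3_zneg ?vec3_scale ?vec3_add ?vec3_sub ?vec3_norm1 ?vec3_nonneg ?mulrN ?mulNr ?mul1r ?mulN1r ?mulr0 ?mul0r ?oppr0 ?add0r ?addr0.

Lemma red_core a1 a2 a3 b1 b2 c1 c2 c3 al be :
  0 < b2 -> b2 < b1 -> 0 < c3 -> 0 <= c1 -> 0 <= c2 -> c1 < c2 + c3 ->
  in_ker (row3 a1 a2 a3) (vec3 b1 (-b2) 0) -> in_ker (row3 a1 a2 a3) (vec3 c1 c2 (-c3)) ->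
  (al != 0) || (be != 0) ->
  exists v, (v = vec3 b1 (-b2) 0 \/ v = vec3 c1 c2 (-c3)) /\
    reduces_distance (row3 a1 a2 a3) v (al *: vec3 b1 (-b2) 0 + be *: vec3 c1 c2 (-c3)).
Proof.
move=> hb2 hb hc3 hc1 hc2 h3 kb kc nz.
rewrite !vec3_scale vec3_add.
have [ha|ha] := ltrP 0 al; have [hbe|hbe] := lerP 0 be.
-
  have f1 : b1 <= al * b1 by nia.
  have f2 : 0 <= be * c1 by nia.
  have f3 : 0 <= al * b2 by nia.
  have f4 : 0 <= be * c3 by nia.
  exists (vec3 b1 (-b2) 0); split; first by left.
  split=> //; eexists; eexists; split; first by left; split; reflexivity.
  exists (-1); split; first by right.
  finish_red.
  split; [split|]; lia.
-
  have f1 : 0 <= al * b1 by nia.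
  have f2 : 0 <= al * b2 by nia.
  have f4 : c3 <= - (be * c3) by nia.
  have f5 : 0 <= - (be * c1) by nia.
  have f6 : c2 <= - (be * c2) by nia.
  exists (vec3 c1 c2 (-c3)); split; first by right.
  split=> //; eexists; eexists; split; first by left; split; reflexivity.
  exists 1; split; first by left.
  finish_red.
  split; [split|]; lia.
- have [hbe1|hbe0] := ltrP 0 be.
  +
    have f1 : al * b1 <= 0 by nia.
    have f2 : al * b2 <= 0 by nia.
    have f4 : c3 <= be * c3 by nia.
    have f5 : 0 <= be * c1 by nia.
    have f6 : c2 <= be * c2 by nia.
    exists (vec3 c1 c2 (-c3)); split; first by right.
    split=> //; eexists; eexists; split; first by right; split; reflexivity.
    exists 1; split; first by left.
    finish_red.
    split; [split|]; lia.
  +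
    have be0 : be = 0 by lia.
    have al0 : al < 0.
      rewrite lt_neqAle ha andbT; move: nz; rewrite be0 eqxx orbF; by [].
    have f1 : b1 <= - (al * b1) by nia.
    have f2 : b2 <= - (al * b2) by nia.
    rewrite be0.
    exists (vec3 b1 (-b2) 0); split; first by left.
    split=> //; eexists; eexists; split; first by right; split; reflexivity.
    exists (-1); split; first by right.
    finish_red.
    split; [split|]; lia.
-
  have [al0|al0] := ltrP al 0.
  + have f1 : b1 <= - (al * b1) by nia.
    have f2 : b2 <= - (al * b2) by nia.
    have f5 : 0 <= - (be * c1) by nia.
    have f6 : 0 <= - (be * c2) by nia.
    have f4 : 0 <= - (be * c3) by nia.
    exists (vec3 b1 (-b2) 0); split; first by left.
    split=> //; eexists; eexists; split; first by right; split; reflexivity.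
    exists (-1); split; first by right.
    finish_red.
    split; [split|]; lia.
  + have al00 : al = 0 by lia.
    rewrite al00.
    have f4 : c3 <= - (be * c3) by nia.
    have f5 : 0 <= - (be * c1) by nia.
    have f6 : c2 <= - (be * c2) by nia.
    exists (vec3 c1 c2 (-c3)); split; first by right.
    split=> //; eexists; eexists; split; first by left; split; reflexivity.
    exists 1; split; first by left.
    finish_red.
    split; [split|]; lia.
Qed.

Lemma vec3_inj x y z x' y' z' : vec3 x y z = vec3 x' y' z' -> [/\ x = x', y = y' & z = z'].
Proof. by move/matrixP => h; move: (h 0 0) (h 1 0) (h 2 0); rewrite !mxE. Qed.

Theorem theorem3p5 (F : fieldType) (a1 a2 a3 b1 b2 c1 c2 c3 : int) :
  0 < a1 -> 0 < a2 -> 0 < a3 ->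
  a1 != a2 -> a1 != a3 -> a2 != a3 ->
  complete_intersection F (row3 a1 a2 a3) ->
  0 < b1 -> 0 < b2 -> 0 < c3 -> 0 <= c1 -> 0 <= c2 -> b2 < b1 ->
  minimal_markov_basis F (row3 a1 a2 a3)
    (fun v => v = vec3 b1 (- b2) 0 \/ v = vec3 c1 c2 (- c3)) ->
  let M := fun v => v = vec3 b1 (- b2) 0 \/ v = vec3 c1 c2 (- c3) in
  let g := gcdz a2 a3 in
  let z := vec3 0 (divz a3 g) (- divz a2 g) in
  (distance_reducing (row3 a1 a2 a3) M <->
     reduces_distance_of (row3 a1 a2 a3) M (fun v => v = z)) /\
  (reduces_distance_of (row3 a1 a2 a3) M (fun v => v = z) <-> c1 < c2 + c3).
Proof.
move=> ha1 ha2 ha3 _ _ _ _ hb1 hb2 hc3 hc1 hc2 hbb Hmin M g z.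
have Hmk := Hmin.1.
have [HkerM _] := Hmk.
have kb : in_ker (row3 a1 a2 a3) (vec3 b1 (-b2) 0) by apply: HkerM; left.
have kc : in_ker (row3 a1 a2 a3) (vec3 c1 c2 (-c3)) by apply: HkerM; right.
have Lat : forall u, in_ker (row3 a1 a2 a3) u -> Lp (vec3 b1 (-b2) 0) (vec3 c1 c2 (-c3)) u.
  by move=> u; apply: markov_lattice Hmk.
have g0 : g != 0 by rewrite /g gcdz_eq0 negb_and gt_eqF.
have gge : 0 <= g by rewrite /g /gcdz.
have gpos : 0 < g by rewrite lt_neqAle eq_sym g0.
have e2 : divz a2 g * g = a2 by apply: divzK; apply: dvdz_gcdl.
have e3 : divz a3 g * g = a3 by apply: divzK; apply: dvdz_gcdr.
have zE : z = vec3 0 (divz a3 g) (- divz a2 g) by [].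
move: zE; clearbody z; move: e2 e3; generalize (divz a2 g) (divz a3 g) => A2 A3 e2 e3 zE.
have A2p : 0 < A2 by nia.
have A3p : 0 < A3 by nia.
have kz : in_ker (row3 a1 a2 a3) z by rewrite zE vec3_ker; rewrite -e2 -e3; ring.
have znz : z != 0 by rewrite zE vec3_eq0 negb_and orbC negb_and gt_eqF.
have H31 : c1 < c2 + c3 -> distance_reducing (row3 a1 a2 a3) M.
  move=> h u ku nz; have [al [be e]] := Lat u ku.
  have nz' : (al != 0) || (be != 0).
    case: eqP => [a0|//] /=; case: eqP => [b0|//]; move: nz.
    by rewrite e a0 b0 !scale0r addr0 eqxx.
  have [v [hv hr]] := red_core hb2 hbb hc3 hc1 hc2 h kb kc nz'.
  by exists v; split => //; rewrite e.
have H23 : reduces_distance_of (row3 a1 a2 a3) M (fun v => v = z) -> c1 < c2 + c3.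
  move=> H; have [v [hv [_ [p [q [hpq [eps [heps [hnn hlt]]]]]]]]] := H z erefl znz.
  have [al [be ez]] := Lat z kz.
  move: ez; rewrite zE !vec3_scale vec3_add => /vec3_inj [f1 f2 f3].
  rewrite ?mulrN ?mulr0 ?add0r in f2 f3.
  have be1 : 0 < be by nia.
  have al0 : al <= 0 by nia.
  have g1 : 0 <= - (al * b2) by nia.
  have g2 : c2 <= be * c2 by nia.
  have g3 : c3 <= be * c3 by nia.
  have hA3 : c2 <= A3 by lia.
  have hA2 : c3 <= A2 by lia.
  move: hnn hlt; move: hv; rewrite /M /=.
  case=> ->; case: hpq => [[-> ->]|[-> ->]]; case: heps => ->; rewrite zE;
  finish_red; move=> [? ? ?]; lia.
split; split.
- by move=> H u -> ; apply: H.
- by move=> H; apply: H31; apply: H23.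
- exact: H23.
- by move=> h; have := H31 h => H u ->; apply: H.
Qed.
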